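(* Let $h,p,K>0$, $H(x)=h\max(x,0)+p\max(-x,0)$, and $\delta(u)=1$ if $u>0$, $\delta(u)=0$ if $u=0$. Fix an initial inventory $x_0\in\mathbb{R}$ and an infinite demand sample path $\omega=(d_1,d_2,\dots)$ of nonnegative demands. For $N\ge1$ and $u_1\ge0$ let \[J_N(u_1,\omega)=H(x_1)+K\delta(u_1)+\min_{u_2,\dots,u_N\ge 0}\sum_{i=2}^N\big(H(x_i)+K\delta(u_i)\big),\quad x_i=x_{i-1}-d_i+u_i,\ i=1,\dots,N,\] and let $J(u_1,\omega)=\lim_{N\to\infty}\frac1N J_N(u_1,\omega)$, assumed to exist (finite) for every $u_1>0$. Then $J(u_1,\omega)$ is convex in $u_1$ on $u_1>0$.
   Context: Periodic-review inventory model with fixed setup cost $K$, holding cost rate $h$, backlog penalty rate $p$ and full backlogging; $J(u_1,\omega)$ is the infinite-horizon average cost along sample path $\omega$ when the first-period order is $u_1$ and later orders are chosen optimally. *)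

(* Defs.v *)
From Stdlib Require Import Reals.
From Coquelicot Require Import Coquelicot.
Open Scope R_scope.

Definition Hcost (h p x : R) : R := h * Rmax x 0 + p * Rmax (- x) 0.

(* setup indicator: delta(u) = 1 if u > 0, 0 otherwise (used only for u >= 0) *)
Definition delta (u : R) : R := if Rlt_dec 0 u then 1 else 0.

(* inventory levels: x_0 = x0, x_i = x_{i-1} - d_i + u_i.
   Demands d and orders u are indexed from 1 (index 0 unused). *)
Fixpoint inv (x0 : R) (d u : nat -> R) (i : nat) : R :=
  match i with
  | O => x0
  | S j => inv x0 d u j - d (S j) + u (S j)
  end.

Fixpoint total_cost (h p K x0 : R) (d u : nat -> R) (N : nat) : R :=
  match N with
  | O => 0
  | S n => total_cost h p K x0 d u n + (Hcost h p (inv x0 d u (S n)) + K * delta (u (S n)))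
  end.

(* J_N(u1, omega): first order fixed to u1, later orders u_2..u_N >= 0 chosen
   optimally (the minimum, taken as the infimum over all admissible choices). *)
Definition J_N (h p K x0 : R) (d : nat -> R) (N : nat) (u1 : R) : R :=
  real (Glb_Rbar (fun c : R => exists u : nat -> R,
          u 1%nat = u1 /\
          (forall i : nat, (2 <= i <= N)%nat -> 0 <= u i) /\
          c = total_cost h p K x0 d u N)).

(* Main.v *)
Require Import Defs.
From Stdlib Require Import Reals Lra Lia Classical.
From Coquelicot Require Import Coquelicot.
Open Scope R_scope.

Lemma lim_invS : is_lim_seq (fun n => / INR (S n)) 0.
Proof.
  apply (is_lim_seq_incr_1 (fun n => / INR n)).
  replace (Finite 0) with (Rbar_inv p_infty) by reflexivity.
  apply is_lim_seq_inv; [apply is_lim_seq_INR | discriminate].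
Qed.

Lemma lim_compare (x y : nat -> R) (lx ly A Y : R) :
  is_lim_seq (fun N => x N / INR (S N)) lx ->
  is_lim_seq (fun N => y N / INR (S N)) ly ->
  (forall N, x N <= y N + A + INR (S N) * Y) -> lx <= ly + Y.
Proof.
  intros Hx Hy H.
  assert (Hg : is_lim_seq (fun N => y N / INR (S N) + A * / INR (S N) + Y) (ly + A * 0 + Y)).
  { apply is_lim_seq_plus'; [apply is_lim_seq_plus'|apply is_lim_seq_const]; auto.
    pose proof (is_lim_seq_scal_l _ A _ lim_invS) as L. exact L. }
  replace (ly + Y) with (ly + A*0 + Y) by ring.
  change (Rbar_le lx (ly + A*0+Y)).
  eapply is_lim_seq_le; [|exact Hx|exact Hg].
  intro n. simpl. pose proof (pos_INR n).
  assert (Hp : 0 < INR (S n)) by (rewrite S_INR; lra).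
  apply Rmult_le_reg_r with (INR (S n)); auto.
  unfold Rdiv. rewrite !Rmult_plus_distr_r.
  rewrite !Rmult_assoc, !Rinv_l by lra. specialize (H n). lra.
Qed.

Fixpoint tsum (f : nat -> R) (N : nat) : R :=
  match N with O => 0 | S n => tsum f n + f (S n) end.

Definition term h p K x0 d u i := Hcost h p (inv x0 d u i) + K * delta (u i).

Lemma total_tsum h p K x0 d u N :
  total_cost h p K x0 d u N = tsum (term h p K x0 d u) N.
Proof. induction N; simpl; auto. rewrite IHN; reflexivity. Qed.

Lemma tsum_mono f g N : (forall i, (1 <= i <= N)%nat -> f i <= g i) -> tsum f N <= tsum g N.
Proof.
  induction N; intros H; simpl; [lra|].
  assert (tsum f N <= tsum g N) by (apply IHN; intros; apply H; lia).
  assert (f (S N) <= g (S N)) by (apply H; lia). lra.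
Qed.

Lemma tsum_plus f g N : tsum (fun i => f i + g i) N = tsum f N + tsum g N.
Proof. induction N; simpl; [ring|rewrite IHN; ring]. Qed.

Lemma tsum_const c N : tsum (fun _ => c) N = INR N * c.
Proof. induction N; simpl tsum; [simpl; ring|rewrite IHN, S_INR; ring]. Qed.

Lemma tsum_ind M X N : 0 <= X ->
  tsum (fun i => if (i <? M)%nat then X else 0) N <= INR M * X.
Proof.
  intros HX.
  assert (E : tsum (fun i => if (i <? M)%nat then X else 0) N = INR (Nat.min N (M-1)) * X).
  { induction N; simpl tsum; [simpl; ring|]. rewrite IHN.
    destruct (Nat.ltb_spec (S N) M).
    - replace (Nat.min (S N) (M-1)) with (S N) by lia.
      replace (Nat.min N (M-1)) with N by lia. rewrite S_INR; ring.
    - replace (Nat.min (S N) (M-1)) with (M-1)%nat by lia.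
      replace (Nat.min N (M-1)) with (M-1)%nat by lia. ring. }
  rewrite E. apply Rmult_le_compat_r; auto. apply le_INR; lia.
Qed.

Lemma tsum_le f g M X Y N : 0 <= X ->
  (forall i, (1 <= i <= N)%nat -> f i <= g i + (if (i <? M)%nat then X else 0) + Y) ->
  tsum f N <= tsum g N + INR M * X + INR N * Y.
Proof.
  intros HX H.
  eapply Rle_trans.
  { apply (tsum_mono f (fun i => (g i + (if (i <? M)%nat then X else 0)) + Y)); auto. }
  rewrite tsum_plus, tsum_plus, tsum_const.
  pose proof (tsum_ind M X N HX). lra.
Qed.

Lemma tsum_ge f L N : (forall i, (1 <= i <= N)%nat -> L <= f i) -> INR N * L <= tsum f N.
Proof. intros H. rewrite <- tsum_const. apply tsum_mono; auto. Qed.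

Lemma Hcost_nonneg h p x : 0 <= h -> 0 <= p -> 0 <= Hcost h p x.
Proof.
  intros. unfold Hcost. pose proof (Rmax_r x 0). pose proof (Rmax_r (-x) 0).
  apply Rplus_le_le_0_compat; apply Rmult_le_pos; lra.
Qed.

Lemma delta_bounds u : 0 <= delta u <= 1.
Proof. unfold delta; destruct (Rlt_dec 0 u); lra. Qed.

Definition Eset h p K x0 d N u1 := fun c : R => exists u : nat -> R,
          u 1%nat = u1 /\
          (forall i : nat, (2 <= i <= N)%nat -> 0 <= u i) /\
          c = total_cost h p K x0 d u N.

Lemma JN_spec h p K x0 d N u1 : 0 <= h -> 0 <= p -> 0 <= K ->
  (forall c, Eset h p K x0 d N u1 c -> J_N h p K x0 d N u1 <= c) /\
  (forall L, (forall c, Eset h p K x0 d N u1 c -> L <= c) -> L <= J_N h p K x0 d N u1).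
Proof.
  intros Hh Hp HK.
  assert (Hnn : forall c, Eset h p K x0 d N u1 c -> 0 <= c).
  { intros c [u [_ [_ ->]]]. rewrite total_tsum.
    replace 0 with (INR N * 0) by ring. apply tsum_ge. intros i _.
    unfold term. pose proof (Hcost_nonneg h p (inv x0 d u i) Hh Hp).
    pose proof (delta_bounds (u i)). nra. }
  assert (Hne : Eset h p K x0 d N u1 (total_cost h p K x0 d (fun i => if Nat.eqb i 1 then u1 else 0) N)).
  { exists (fun i => if Nat.eqb i 1 then u1 else 0). split; [reflexivity|split; auto].
    intros i Hi. destruct (Nat.eqb_spec i 1); [lia|lra]. }
  unfold J_N. fold (Eset h p K x0 d N u1).
  destruct (Glb_Rbar_correct (Eset h p K x0 d N u1)) as [Hlb Hgl].
  assert (H0 : Rbar_le 0 (Glb_Rbar (Eset h p K x0 d N u1))).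
  { apply Hgl. intros c Hc. simpl. auto. }
  pose proof (Hlb _ Hne) as H1.
  destruct (Glb_Rbar (Eset h p K x0 d N u1)) as [g| |]; simpl in *; try contradiction.
  split.
  - intros c Hc. exact (Hlb c Hc).
  - intros L HL. assert (Rbar_le L g) by (apply Hgl; intros c Hc; simpl; auto). exact H.
Qed.

Fixpoint Ssum (d : nat -> R) (i : nat) : R :=
  match i with O => 0 | S j => Ssum d j + d (S j) end.

Lemma inv_formula x0 d u i : inv x0 d u i = x0 + Ssum u i - Ssum d i.
Proof. induction i; simpl; [ring|rewrite IHi; ring]. Qed.

Lemma Ssum_mono d i j : (forall k, 0 <= d k) -> (i <= j)%nat -> Ssum d i <= Ssum d j.
Proof.
  intros Hd H. induction H; [lra|]. simpl. specialize (Hd (S m)). lra.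
Qed.

Lemma Ssum_nonneg d i : (forall k, 0 <= d k) -> 0 <= Ssum d i.
Proof. intros Hd. apply (Ssum_mono d 0 i Hd). lia. Qed.

Lemma Ssum_lower u a N i : u 1%nat = a -> (forall k, (2 <= k <= N)%nat -> 0 <= u k) ->
  (1 <= i <= N)%nat -> a <= Ssum u i.
Proof.
  intros H1 H2. induction i; intros Hi; [lia|].
  destruct i. simpl. lra.
  simpl. assert (a <= Ssum u (S i)) by (apply IHi; lia).
  assert (0 <= u (S (S i))) by (apply H2; lia). simpl in H. lra.
Qed.

Lemma inv_lower x0 d u a N i : u 1%nat = a -> (forall k, (2 <= k <= N)%nat -> 0 <= u k) ->
  (1 <= i <= N)%nat -> x0 + a - Ssum d i <= inv x0 d u i.
Proof. intros. rewrite inv_formula. pose proof (Ssum_lower u a N i H H0 H1). lra. Qed.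

Lemma Hcost_max h p x z : 0 <= h -> 0 <= p ->
  Hcost h p (Rmax x z) <= Hcost h p x + h * Rmax (z - x) 0.
Proof.
  intros. unfold Hcost, Rmax.
  repeat match goal with |- context [Rle_dec ?a ?b] => destruct (Rle_dec a b) end; nra.
Qed.

Lemma Hcost_max_neg h p x z : 0 <= h -> 0 <= p -> z <= 0 ->
  Hcost h p (Rmax x z) <= Hcost h p x.
Proof.
  intros. unfold Hcost, Rmax.
  repeat match goal with |- context [Rle_dec ?a ?b] => destruct (Rle_dec a b) end; nra.
Qed.

Lemma Hcost_sub h p x e : 0 <= h -> 0 <= p -> 0 <= e ->
  Hcost h p (x - e) <= Hcost h p x + p * e.
Proof.
  intros. unfold Hcost, Rmax.
  repeat match goal with |- context [Rle_dec ?a ?b] => destruct (Rle_dec a b) end; nra.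
Qed.

Lemma Hcost_ge h p x c : 0 <= h -> 0 <= p -> c <= x -> h * Rmax c 0 <= Hcost h p x.
Proof.
  intros. unfold Hcost, Rmax.
  repeat match goal with |- context [Rle_dec ?a ?b] => destruct (Rle_dec a b) end; nra.
Qed.

Lemma Hcost_pos h p x : 0 <= x -> Hcost h p x = h * x.
Proof.
  intros. unfold Hcost, Rmax.
  repeat match goal with |- context [Rle_dec ?a ?b] => destruct (Rle_dec a b) end; try lra.
  replace x with 0 by lra. ring.
Qed.

Lemma Rmax_shift A B c : Rmax (A + c) (B + c) = Rmax A B + c.
Proof. unfold Rmax; repeat match goal with |- context [Rle_dec ?a ?b] => destruct (Rle_dec a b) end; lra. Qed.

Lemma Rmax_monoA A B u : 0 <= u -> Rmax A B <= Rmax (A + u) B.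
Proof. intros; unfold Rmax; repeat match goal with |- context [Rle_dec ?a ?b] => destruct (Rle_dec a b) end; lra. Qed.

Lemma JN_compare h p K x0 d N a b C : 0 <= h -> 0 <= p -> 0 <= K ->
  (forall u, u 1%nat = a -> (forall i, (2 <= i <= N)%nat -> 0 <= u i) ->
     exists v, v 1%nat = b /\ (forall i, (2 <= i <= N)%nat -> 0 <= v i) /\
       total_cost h p K x0 d v N <= total_cost h p K x0 d u N + C) ->
  J_N h p K x0 d N b <= J_N h p K x0 d N a + C.
Proof.
  intros Hh Hp HK H.
  destruct (JN_spec h p K x0 d N a Hh Hp HK) as [_ Ha].
  destruct (JN_spec h p K x0 d N b Hh Hp HK) as [Hb _].
  cut (J_N h p K x0 d N b - C <= J_N h p K x0 d N a). lra.
  apply Ha. intros c [u [H1 [H2 ->]]].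
  destruct (H u H1 H2) as [v [V1 [V2 V3]]].
  assert (J_N h p K x0 d N b <= total_cost h p K x0 d v N) by (apply Hb; exists v; auto).
  lra.
Qed.

Lemma JN_mono h p K x0 d N a b : 0 <= h -> 0 <= p -> 0 <= K -> 0 < a -> a <= b ->
  J_N h p K x0 d N a <= J_N h p K x0 d N b + INR 3 * (p * (b - a) + K).
Proof.
  intros Hh Hp HK Ha Hab. apply JN_compare; auto.
  intros u U1 U2.
  set (w := fun i => if Nat.eqb i 1 then a else if Nat.eqb i 2 then u 2%nat + (b - a) else u i).
  assert (W1 : inv x0 d w 1 = inv x0 d u 1 - (b - a)).
  { simpl. unfold w; simpl. rewrite U1. ring. }
  assert (W2 : forall j, inv x0 d w (S (S j)) = inv x0 d u (S (S j))).
  { induction j.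
    - change (inv x0 d w 1 - d 2%nat + w 2%nat = inv x0 d u 1 - d 2%nat + u 2%nat).
      rewrite W1. unfold w; simpl. ring.
    - change (inv x0 d w (S (S j)) - d (S (S (S j))) + w (S (S (S j))) =
              inv x0 d u (S (S j)) - d (S (S (S j))) + u (S (S (S j)))).
      rewrite IHj. reflexivity. }
  exists w. split; [reflexivity|split].
  - intros i Hi. unfold w. destruct (Nat.eqb_spec i 1); [lia|].
    destruct (Nat.eqb_spec i 2). subst. specialize (U2 2%nat Hi). lra. auto.
  - rewrite !total_tsum. replace (total_cost h p K x0 d u N) with (tsum (term h p K x0 d u) N) by (symmetry; apply total_tsum).
    replace (tsum (term h p K x0 d u) N + INR 3 * (p * (b - a) + K)) with
      (tsum (term h p K x0 d u) N + INR 3 * (p * (b - a) + K) + INR N * 0) by ring.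
    apply tsum_le. nra.
    intros i Hi. unfold term.
    destruct i as [|[|[|i]]]; [lia| | |].
    + rewrite W1. pose proof (Hcost_sub h p (inv x0 d u 1) (b-a) Hh Hp ltac:(lra)).
      unfold w; simpl. rewrite U1. unfold delta.
      destruct (Rlt_dec 0 a); destruct (Rlt_dec 0 b); try lra. simpl.
      simpl in H. rewrite U1 in H. lra.
    + rewrite W2. unfold w; simpl. pose proof (delta_bounds (u 2%nat + (b-a))).
      pose proof (delta_bounds (u 2%nat)). nra.
    + rewrite W2. unfold w; simpl. lra.
Qed.

Lemma JN_unb h p K x0 d N a b T0 : 0 <= h -> 0 <= p -> 0 <= K -> 0 < a -> a <= b ->
  (forall i, (T0 <= i)%nat -> x0 + b <= Ssum d i) ->
  J_N h p K x0 d N b <= J_N h p K x0 d N a + INR T0 * (h * (b - a)).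
Proof.
  intros Hh Hp HK Ha Hab HT. apply JN_compare; auto.
  intros u U1 U2.
  set (w := fun i => if Nat.eqb i 1 then b else 0).
  set (xu := inv x0 d u). set (xw := inv x0 d w).
  set (v := fun i => match i with O => 0 | S j => Rmax (xu (S j)) (xw (S j)) - Rmax (xu j) (xw j) + d (S j) end).
  assert (Vinv : forall i, inv x0 d v i = Rmax (xu i) (xw i)).
  { induction i.
    - simpl. unfold xu, xw; simpl. rewrite Rmax_left; lra.
    - simpl. rewrite IHi. unfold v. ring. }
  assert (XW : forall i, (1 <= i)%nat -> xw i = x0 + b - Ssum d i).
  { intros i Hi. unfold xw. rewrite inv_formula.
    assert (Ssum w i = b). { induction i; [lia|]. destruct i. simpl. unfold w; simpl. ring.
      simpl. simpl in IHi. rewrite IHi by lia. unfold w; simpl. ring. }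
    rewrite H. ring. }
  assert (V1 : v 1%nat = b).
  { unfold v. change (Rmax (x0 - d 1%nat + u 1%nat) (x0 - d 1%nat + w 1%nat) - Rmax x0 x0 + d 1%nat = b).
    rewrite U1. unfold w; simpl. rewrite (Rmax_left x0 x0) by lra. rewrite Rmax_right by lra. ring. }
  assert (Vi : forall j, (1 <= j)%nat -> 0 <= u (S j) -> 0 <= v (S j) /\ (u (S j) = 0 -> v (S j) = 0)).
  { intros j Hj Hu. unfold v. change (xu (S j)) with (xu j - d (S j) + u (S j)).
    change (xw (S j)) with (xw j - d (S j) + w (S j)).
    replace (w (S j)) with 0 by (unfold w; destruct (Nat.eqb_spec (S j) 1); [lia|reflexivity]).
    split.
    - pose proof (Rmax_monoA (xu j - d (S j)) (xw j - d (S j) + 0) (u (S j)) Hu).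
      unfold Rminus in *. rewrite Rplus_0_r in *. rewrite Rmax_shift in H. lra.
    - intros ->. rewrite !Rplus_0_r. unfold Rminus. rewrite Rmax_shift. ring. }
  exists v. split; [exact V1|split].
  - intros i Hi. destruct i as [|j]; [lia|]. apply Vi; [lia|apply U2; lia].
  - rewrite !total_tsum.
    replace (tsum (term h p K x0 d u) N + INR T0 * (h * (b - a))) with
      (tsum (term h p K x0 d u) N + INR T0 * (h * (b - a)) + INR N * 0) by ring.
    apply tsum_le. nra.
    intros i Hi. unfold term. rewrite Vinv. fold (xu i).
    assert (Hd : K * delta (v i) <= K * delta (u i)).
    { apply Rmult_le_compat_l; auto. destruct i as [|j]; [lia|].
      destruct j. rewrite V1, U1. unfold delta. destruct (Rlt_dec 0 a); destruct (Rlt_dec 0 b); lra.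
      assert (Hu : 0 <= u (S (S j))) by (apply U2; lia).
      destruct (Vi (S j) ltac:(lia) Hu) as [_ Hz].
      destruct (Req_dec (u (S (S j))) 0) as [E|E].
      - rewrite Hz by exact E. rewrite E. lra.
      - unfold delta at 2. destruct (Rlt_dec 0 (u (S (S j)))); [|lra].
        pose proof (delta_bounds (v (S (S j)))). lra. }
    assert (Hlow : x0 + a - Ssum d i <= xu i) by (apply (inv_lower x0 d u a N i); auto).
    rewrite (XW i) by lia.
    destruct (Nat.ltb_spec i T0).
    + pose proof (Hcost_max h p (xu i) (x0 + b - Ssum d i) Hh Hp).
      assert (h * Rmax (x0 + b - Ssum d i - xu i) 0 <= h * (b - a)).
      { apply Rmult_le_compat_l; auto. unfold Rmax; destruct (Rle_dec _ _); lra. }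
      lra.
    + pose proof (HT i H).
      pose proof (Hcost_max_neg h p (xu i) (x0 + b - Ssum d i) Hh Hp ltac:(lra)). lra.
Qed.

Lemma JN_lower h p K x0 d N u1 D : 0 <= h -> 0 <= p -> 0 <= K ->
  (forall i, Ssum d i <= D) ->
  INR N * (h * Rmax (x0 + u1 - D) 0) <= J_N h p K x0 d N u1.
Proof.
  intros Hh Hp HK HD. destruct (JN_spec h p K x0 d N u1 Hh Hp HK) as [_ H].
  apply H. intros c [u [U1 [U2 ->]]]. rewrite total_tsum. apply tsum_ge.
  intros i Hi. unfold term. pose proof (delta_bounds (u i)).
  pose proof (inv_lower x0 d u u1 N i U1 U2 Hi). pose proof (HD i).
  pose proof (Hcost_ge h p (inv x0 d u i) (x0 + u1 - D) Hh Hp ltac:(lra)). nra.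
Qed.

Lemma JN_upper_pos h p K x0 d N u1 D eps M : 0 <= h -> 0 <= p -> 0 <= K ->
  (forall k, 0 <= d k) ->
  (forall i, Ssum d i <= D) -> (forall i, (M <= i)%nat -> D - eps <= Ssum d i) ->
  0 <= x0 + u1 - D ->
  J_N h p K x0 d N u1 <= 0 + INR (S (S M)) * (h * (x0 + u1) + K) + INR N * (h * (x0 + u1 - D + eps)).
Proof.
  intros Hh Hp HK Hd HD HM Hc. destruct (JN_spec h p K x0 d N u1 Hh Hp HK) as [H _].
  set (w := fun i => if Nat.eqb i 1 then u1 else 0).
  eapply Rle_trans. apply H. exists w. split; [reflexivity|split].
  intros i Hi; unfold w; destruct (Nat.eqb_spec i 1); [lia|lra].
  reflexivity.
  rewrite total_tsum. replace 0 with (tsum (fun _ => 0) N) by (rewrite tsum_const; ring).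
  assert (0 <= eps) by (pose proof (HD M); pose proof (HM M (le_n _)); lra).
  apply tsum_le. pose proof (HD 0%nat). simpl in H1. nra.
  intros i Hi. unfold term.
  assert (Sw : Ssum w i = u1).
  { destruct Hi as [Hi _]. induction i; [lia|]. destruct i. simpl. unfold w; simpl. ring.
      simpl. simpl in IHi. rewrite IHi by lia. unfold w; simpl. ring. }
  rewrite inv_formula, Sw. pose proof (Ssum_nonneg d i Hd). pose proof (HD i).
  rewrite Hcost_pos by lra. pose proof (delta_bounds (w i)).
  destruct (Nat.ltb_spec i (S (S M))).
  - nra.
  - assert (w i = 0) as -> by (unfold w; destruct (Nat.eqb_spec i 1); [lia|auto]).
    unfold delta. destruct (Rlt_dec 0 0); [lra|].
    pose proof (HM i ltac:(lia)). nra.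
Qed.

Lemma JN_upper_neg h p K x0 d N u1 D eps M : 0 <= h -> 0 <= p -> 0 <= K ->
  (forall k, 0 <= d k) ->
  (forall i, Ssum d i <= D) -> (forall i, (M <= i)%nat -> D - eps <= Ssum d i) ->
  x0 + u1 - D < 0 ->
  J_N h p K x0 d N u1 <= 0 + INR (S (S (S M))) * (Hcost h p (x0 - d 1%nat + u1) + K + h * D + K)
     + INR N * (h * eps).
Proof.
  intros Hh Hp HK Hd HD HM Hc. destruct (JN_spec h p K x0 d N u1 Hh Hp HK) as [H _].
  set (q := D - x0 - u1).
  set (w := fun i => if Nat.eqb i 1 then u1 else if Nat.eqb i 2 then q else 0).
  eapply Rle_trans. apply H. exists w. split; [reflexivity|split].
  intros i Hi; unfold w, q; destruct (Nat.eqb_spec i 1); [lia|]; destruct (Nat.eqb_spec i 2); lra.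
  reflexivity.
  rewrite total_tsum. replace 0 with (tsum (fun _ => 0) N) by (rewrite tsum_const; ring).
  assert (0 <= eps) by (pose proof (HD M); pose proof (HM M (le_n _)); lra).
  pose proof (HD 0%nat) as HD0. simpl in HD0.
  apply tsum_le. pose proof (Hcost_nonneg h p (x0 - d 1%nat + u1) Hh Hp). nra.
  intros i Hi. unfold term.
  destruct i as [|[|i]]; [lia| |].
  - unfold w; simpl. pose proof (delta_bounds u1). nra.
  - assert (Sw : Ssum w (S (S i)) = u1 + q).
    { clear Hi. induction i. simpl. unfold w; simpl. ring.
      change (Ssum w (S (S i)) + w (S (S (S i))) = u1 + q). rewrite IHi. unfold w; simpl. ring. }
    rewrite inv_formula, Sw. unfold q.
    pose proof (Ssum_nonneg d (S (S i)) Hd). pose proof (HD (S (S i))).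
    rewrite Hcost_pos by lra. pose proof (delta_bounds (w (S (S i)))).
    pose proof (Hcost_nonneg h p (x0 - d 1%nat + u1) Hh Hp).
    destruct (Nat.ltb_spec (S (S i)) (S (S (S M)))).
    + nra.
    + assert (w (S (S i)) = 0) as -> by (unfold w; destruct i; [lia|reflexivity]).
      unfold delta. destruct (Rlt_dec 0 0); [lra|].
      pose proof (HM (S (S i)) ltac:(lia)). nra.
Qed.

Lemma Rmax_convex A B t : 0 <= t <= 1 ->
  Rmax (t * A + (1 - t) * B) 0 <= t * Rmax A 0 + (1 - t) * Rmax B 0.
Proof.
  intros. unfold Rmax.
  repeat match goal with |- context [Rle_dec ?a ?b] => destruct (Rle_dec a b) end; nra.
Qed.

Lemma lim_const_div g : is_lim_seq (fun N => INR (S N) * g / INR (S N)) g.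
Proof.
  apply is_lim_seq_ext with (fun _ => g); [|apply is_lim_seq_const].
  intro n. assert (INR (S n) <> 0) by (rewrite S_INR; pose proof (pos_INR n); lra). field; auto.
Qed.

Theorem theorem4 (h p K x0 : R) (d : nat -> R) (J : R -> R) :
  0 < h -> 0 < p -> 0 < K ->
  (forall i : nat, 0 <= d i) ->
  (forall u1 : R, 0 < u1 ->
     is_lim_seq (fun N : nat => J_N h p K x0 d (S N) u1 / INR (S N)) (J u1)) ->
  forall a b t : R, 0 < a -> 0 < b -> 0 <= t <= 1 ->
    J (t * a + (1 - t) * b) <= t * J a + (1 - t) * J b.
Proof.
  intros Hh Hp HK Hd HJ a b t Ha Hb Ht.
  assert (Hm : 0 < t * a + (1 - t) * b) by nra.
  set (m := t * a + (1 - t) * b) in *.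
  destruct (classic (exists Mb, forall i, Ssum d i <= Mb)) as [[Mb HMb]|Hunb].
  - destruct (completeness (fun y => exists i, y = Ssum d i)) as [D [HD1 HD2]].
    { exists Mb. intros y [i ->]. auto. }
    { exists 0, 0%nat. reflexivity. }
    assert (HD : forall i, Ssum d i <= D) by (intro i; apply HD1; exists i; auto).
    assert (Happ : forall eps, 0 < eps -> exists M, forall i, (M <= i)%nat -> D - eps <= Ssum d i).
    { intros eps He. destruct (classic (exists i, D - eps < Ssum d i)) as [[i Hi]|Hn].
      - exists i. intros j Hj. pose proof (Ssum_mono d i j Hd Hj). lra.
      - exfalso. assert (D <= D - eps); [|lra]. apply HD2. intros y [i ->].
        destruct (Rle_lt_dec (Ssum d i) (D - eps)); auto. exfalso; apply Hn; exists i; auto. }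
    assert (Hform : forall u, 0 < u -> J u = h * Rmax (x0 + u - D) 0).
    { intros u Hu. apply Rle_antisym.
      - assert (Heps : forall eps, 0 < eps -> J u <= h * Rmax (x0 + u - D) 0 + h * eps).
        { intros eps He. destruct (Happ eps He) as [M HM].
          destruct (Rle_lt_dec 0 (x0 + u - D)) as [Hc|Hc].
          + rewrite Rmax_left by lra.
            replace (h * (x0 + u - D) + h * eps) with (0 + h * (x0 + u - D + eps)) by ring.
            apply (lim_compare (fun N => J_N h p K x0 d (S N) u) (fun _ => 0) (J u) 0
                     (INR (S (S M)) * (h * (x0 + u) + K))); auto.
            * apply is_lim_seq_ext with (fun _ => 0); [intro; unfold Rdiv; ring|apply is_lim_seq_const].
            * intro N. apply JN_upper_pos; auto; lra.
          + rewrite Rmax_right by lra.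
            replace (h * 0 + h * eps) with (0 + h * eps) by ring.
            apply (lim_compare (fun N => J_N h p K x0 d (S N) u) (fun _ => 0) (J u) 0
                     (INR (S (S (S M))) * (Hcost h p (x0 - d 1%nat + u) + K + h * D + K))); auto.
            * apply is_lim_seq_ext with (fun _ => 0); [intro; unfold Rdiv; ring|apply is_lim_seq_const].
            * intro N. apply JN_upper_neg; auto; lra. }
        destruct (Rle_lt_dec (J u) (h * Rmax (x0 + u - D) 0)) as [|Hlt]; auto.
        set (g := h * Rmax (x0 + u - D) 0) in *.
        specialize (Heps ((J u - g) / (2 * h)) ltac:(apply Rdiv_lt_0_compat; lra)).
        replace (h * ((J u - g) / (2 * h))) with ((J u - g) / 2) in Heps by (field; lra). lra.
      - replace (J u) with (J u + 0) by ring.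
        apply (lim_compare (fun N => INR (S N) * (h * Rmax (x0 + u - D) 0))
                 (fun N => J_N h p K x0 d (S N) u) _ _ 0 0); auto.
        + apply lim_const_div.
        + intro N. pose proof (JN_lower h p K x0 d (S N) u D ltac:(lra) ltac:(lra) ltac:(lra) HD). lra. }
    rewrite !Hform by auto. unfold m.
    replace (x0 + (t * a + (1 - t) * b) - D) with (t * (x0 + a - D) + (1 - t) * (x0 + b - D)) by ring.
    pose proof (Rmax_convex (x0 + a - D) (x0 + b - D) t Ht). nra.
  - assert (Hbig : forall X, exists T0, forall i, (T0 <= i)%nat -> X <= Ssum d i).
    { intros X. destruct (classic (exists i, X <= Ssum d i)) as [[i Hi]|Hn].
      - exists i. intros j Hj. pose proof (Ssum_mono d i j Hd Hj). lra.
      - exfalso. apply Hunb. exists X. intro i.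
        destruct (Rle_lt_dec X (Ssum d i)); [exfalso; apply Hn; exists i; auto|lra]. }
    assert (Heq : forall x y, 0 < x -> x <= y -> J x = J y).
    { intros x y Hx Hxy. apply Rle_antisym.
      - replace (J x) with (J x + 0) by ring.
        replace (J y) with (J y + 0) by ring.
        rewrite Rplus_0_r.
        apply (lim_compare (fun N => J_N h p K x0 d (S N) x) (fun N => J_N h p K x0 d (S N) y) _ _
                 (INR 3 * (p * (y - x) + K)) 0); auto; try (apply HJ; lra).
        intro N. pose proof (JN_mono h p K x0 d (S N) x y ltac:(lra) ltac:(lra) ltac:(lra) Hx Hxy). lra.
      - destruct (Hbig (x0 + y)) as [T0 HT0].
        replace (J x) with (J x + 0) by ring.
        apply (lim_compare (fun N => J_N h p K x0 d (S N) y) (fun N => J_N h p K x0 d (S N) x) _ _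
                 (INR T0 * (h * (y - x))) 0); auto; try (apply HJ; lra).
        intro N. pose proof (JN_unb h p K x0 d (S N) x y T0 ltac:(lra) ltac:(lra) ltac:(lra) Hx Hxy HT0). lra. }
    assert (Hc : forall u, 0 < u -> J u = J a).
    { intros u Hu. destruct (Rle_lt_dec a u). symmetry; apply Heq; auto. apply Heq; lra. }
    rewrite (Hc m Hm), (Hc b Hb). nra.
Qed.
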